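(* Let $(a^*,b^* ),(c^*,d^* )$ be a pair of distinct corners maximizing $\min_\pi f_{abcd}(\pi)$ over all pairs of distinct corners, and let $\pi_{a^*b^*c^*d^*}$ be the minimizer of $f_{a^*b^*c^*d^*}$. Then $\pi^*=\pi_{a^*b^*c^*d^*}$ is the (unique) solution of the minimax problem $$\min_{\pi\in\mathbb R}\max_{(\mu,\sigma)\in D}F(\pi,\mu,\sigma).$$
   Context: Let $0<\mu_-<\mu_+$ and $0<\sigma_-<\sigma_+$ be real numbers, $D=[\mu_-,\mu_+]\times[\sigma_-,\sigma_+]$, and $h_0,h_1\in\mathbb R$. For $\pi\in\mathbb R$ and $(\mu,\sigma)\in D$ put $F(\pi,\mu,\sigma)=(h_0-\pi\mu)^2+(h_1-\pi\sigma)^2$. For corners $(a,b),(c,d)\in\{-,+\}^2$ let $f_{ab}(\pi)=F(\pi,\mu_a,\sigma_b)$ and $f_{abcd}(\pi)=\max(f_{ab}(\pi),f_{cd}(\pi))$. *)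

(* Defs.v *)
From Stdlib Require Import Reals.
Open Scope R_scope.

Definition F (h0 h1 pi mu sigma : R) : R :=
  (h0 - pi * mu) ^ 2 + (h1 - pi * sigma) ^ 2.

(* A sign in {-,+} is encoded as a bool: false = '-', true = '+'. *)
Definition pick (b : bool) (lo hi : R) : R := if b then hi else lo.

(* A corner (a,b) of D = [mu_-,mu_+] x [sigma_-,sigma_+]. *)
Definition corner := (bool * bool)%type.

Definition f_corner (mum mup sgm sgp h0 h1 : R) (c : corner) (pi : R) : R :=
  F h0 h1 pi (pick (fst c) mum mup) (pick (snd c) sgm sgp).

Definition f_pair (mum mup sgm sgp h0 h1 : R) (c1 c2 : corner) (pi : R) : R :=
  Rmax (f_corner mum mup sgm sgp h0 h1 c1 pi) (f_corner mum mup sgm sgp h0 h1 c2 pi).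

Definition is_minimizer (g : R -> R) (x : R) : Prop := forall y, g x <= g y.

Definition is_max_over_D (mum mup sgm sgp h0 h1 pi v : R) : Prop :=
  (exists mu sigma, mum <= mu <= mup /\ sgm <= sigma <= sgp /\ F h0 h1 pi mu sigma = v) /\
  (forall mu sigma, mum <= mu <= mup -> sgm <= sigma <= sgp -> F h0 h1 pi mu sigma <= v).

(* Main.v *)
Require Import Defs.
From Stdlib Require Import Reals Lra Psatz.
Open Scope R_scope.

Lemma F_cont h0 h1 mu sg x : continuity_pt (fun p => F h0 h1 p mu sg) x.
Proof. unfold F. reg. Qed.

Lemma Rmax_abs a b : Rmax a b = (a + b + Rabs (a - b)) / 2.
Proof. unfold Rmax, Rabs; destruct (Rle_dec a b); destruct (Rcase_abs (a-b)); lra. Qed.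

Lemma max_cont f g x : continuity_pt f x -> continuity_pt g x ->
  continuity_pt (fun p => Rmax (f p) (g p)) x.
Proof.
  intros Hf Hg.
  apply continuity_pt_locally_ext with (f := fun p => (f p + g p + Rabs (f p - g p)) / 2) (a := 1).
  lra. intros; rewrite Rmax_abs; reflexivity.
  apply continuity_pt_div. apply continuity_pt_plus. apply continuity_pt_plus; auto.
  apply (continuity_pt_comp (fun p => f p - g p) Rabs).
  apply continuity_pt_minus; auto. apply Rcontinuity_abs.
  apply continuity_pt_const; intros a b; reflexivity. lra.
Qed.

Lemma exists_min (h : R -> R) h0 mu : 0 < mu -> (forall x, continuity_pt h x) ->
  (forall x, (h0 - x * mu)^2 <= h x) -> exists p, forall y, h p <= h y.
Proof.
  intros Hmu Hc Hb.
  assert (H0 : 0 <= h 0) by (specialize (Hb 0); nra).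
  set (M := (Rabs h0 + h 0 + 1) / mu).
  assert (HM : 0 <= M) by (unfold M; unfold Rdiv; apply Rmult_le_pos; [pose proof (Rabs_pos h0); lra| left; apply Rinv_0_lt_compat; lra]).
  destruct (continuity_ab_min h (-M) M) as [x0 [Hx0 Hr]]; [lra| intros; auto |].
  exists x0. intros y.
  destruct (Rle_dec (-M) y) as [Hl|Hl]; [destruct (Rle_dec y M) as [Hu|Hu]|].
  - apply Hx0; lra.
  - assert (y * mu > Rabs h0 + h 0 + 1).
    { unfold M in Hu. apply Rnot_le_lt in Hu.
      apply Rmult_lt_compat_r with (r := mu) in Hu; auto.
      unfold Rdiv in Hu; rewrite Rmult_assoc, Rinv_l in Hu; lra. }
    pose proof (Rle_abs h0). specialize (Hb y).
    assert (h x0 <= h 0) by (apply Hx0; lra). nra.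
  - assert (y * mu < - (Rabs h0 + h 0 + 1)).
    { unfold M in Hl. apply Rnot_le_lt in Hl.
      apply Rmult_lt_compat_r with (r := mu) in Hl; auto.
      unfold Rdiv in Hl. rewrite Ropp_mult_distr_l_reverse, Rmult_assoc, Rinv_l in Hl; lra. }
    pose proof (Rle_abs (-h0)). rewrite Rabs_Ropp in H1. specialize (Hb y).
    assert (h x0 <= h 0) by (apply Hx0; lra). nra.
Qed.

Lemma pick_pos b lo hi : 0 < lo -> lo < hi -> 0 < pick b lo hi.
Proof. destruct b; simpl; lra. Qed.

Lemma pick_in b lo hi : lo < hi -> lo <= pick b lo hi <= hi.
Proof. destruct b; simpl; lra. Qed.

Lemma pair_min_exists mum mup sgm sgp h0 h1 c1 c2 :
  0 < mum -> mum < mup ->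
  exists p, is_minimizer (f_pair mum mup sgm sgp h0 h1 c1 c2) p.
Proof.
  intros H0 H1.
  apply (exists_min _ h0 (pick (fst c1) mum mup)). apply pick_pos; auto.
  intros x; unfold f_pair, f_corner. apply (max_cont (fun p => F _ _ p _ _) (fun p => F _ _ p _ _)); apply F_cont.
  intros x. unfold f_pair. eapply Rle_trans; [|apply Rmax_l]. unfold f_corner, F.
  pose proof (pow2_ge_0 (h1 - x * pick (snd c1) sgm sgp)). lra.
Qed.

Lemma pow_lt_alt_helper x : x <> 0 -> 0 < x^2.
Proof. intros; simpl; rewrite Rmult_1_r; apply Rsqr_pos_lt; auto. Qed.

Lemma F_mid h0 h1 mu sg a b : 0 < mu -> a <> b ->
  2 * F h0 h1 ((a+b)/2) mu sg < F h0 h1 a mu sg + F h0 h1 b mu sg.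
Proof.
  intros Hm Hab. unfold F.
  assert (E : F h0 h1 a mu sg + F h0 h1 b mu sg - 2 * F h0 h1 ((a+b)/2) mu sg
            = (mu^2 + sg^2) * (a - b)^2 / 2) by (unfold F; field).
  unfold F in E.
  assert (0 < (a-b)^2) by (apply pow_lt_alt_helper; lra).
  assert (0 < mu^2) by (apply pow_lt_alt_helper; lra).
  assert (0 <= sg^2) by apply pow2_ge_0. nra.
Qed.

Lemma F_conv h0 h1 mu sg a z b m : a <= z <= b ->
  F h0 h1 a mu sg <= m -> F h0 h1 b mu sg <= m -> F h0 h1 z mu sg <= m.
Proof.
  intros Hz Ha Hb.
  assert (E : (b - z) * F h0 h1 a mu sg + (z - a) * F h0 h1 b mu sg - (b - a) * F h0 h1 z mu sg
             = (mu^2 + sg^2) * (b - a) * (z - a) * (b - z)) by (unfold F; ring).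
  destruct (Req_dec a b) as [e|ne].
  - subst. replace z with b by lra. auto.
  - assert (0 <= mu^2 + sg^2) by (pose proof (pow2_ge_0 mu); pose proof (pow2_ge_0 sg); lra).
    assert (0 <= (mu^2 + sg^2) * (b - a) * (z - a) * (b - z)).
    { repeat apply Rmult_le_pos; lra. }
    assert ((b - a) * F h0 h1 z mu sg <= (b - a) * m) by nra.
    apply Rmult_le_reg_l with (b - a); lra.
Qed.

Lemma F_conv' h0 h1 mu sg a z b m : (a <= z <= b \/ b <= z <= a) ->
  F h0 h1 a mu sg <= m -> F h0 h1 b mu sg <= m -> F h0 h1 z mu sg <= m.
Proof. intros [H|H] Ha Hb; eapply F_conv; eauto. Qed.

Lemma pair_unique mum mup sgm sgp h0 h1 c1 c2 p x :
  0 < mum -> mum < mup ->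
  is_minimizer (f_pair mum mup sgm sgp h0 h1 c1 c2) p ->
  f_pair mum mup sgm sgp h0 h1 c1 c2 x <= f_pair mum mup sgm sgp h0 h1 c1 c2 p -> x = p.
Proof.
  intros H0 H1 Hp Hx. destruct (Req_dec x p) as [|ne]; auto. exfalso.
  specialize (Hp ((x+p)/2)).
  unfold f_pair, f_corner in *.
  pose proof (F_mid h0 h1 _ (pick (snd c1) sgm sgp) x p (pick_pos (fst c1) mum mup H0 H1) ne).
  pose proof (F_mid h0 h1 _ (pick (snd c2) sgm sgp) x p (pick_pos (fst c2) mum mup H0 H1) ne).
  set (m := Rmax (F h0 h1 p (pick (fst c1) mum mup) (pick (snd c1) sgm sgp))
          (F h0 h1 p (pick (fst c2) mum mup) (pick (snd c2) sgm sgp))) in *.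
  pose proof (Rmax_l (F h0 h1 p (pick (fst c1) mum mup) (pick (snd c1) sgm sgp))
          (F h0 h1 p (pick (fst c2) mum mup) (pick (snd c2) sgm sgp))).
  pose proof (Rmax_r (F h0 h1 p (pick (fst c1) mum mup) (pick (snd c1) sgm sgp))
          (F h0 h1 p (pick (fst c2) mum mup) (pick (snd c2) sgm sgp))).
  fold m in H3, H4.
  apply Rmax_Rle in Hp.
  pose proof (Rle_trans _ _ _ (Rmax_l _ _) Hx).
  pose proof (Rle_trans _ _ _ (Rmax_r _ _) Hx).
  destruct Hp; lra.
Qed.

Lemma sq_between u a b : (a <= u <= b \/ b <= u <= a) -> u^2 <= Rmax (a^2) (b^2).
Proof.
  intros H.
  assert (u^2 <= a^2 \/ u^2 <= b^2).
  { simpl; rewrite !Rmult_1_r. destruct (Rle_dec 0 u); destruct H as [[H1 H2]|[H1 H2]].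
    - right; apply Rmult_le_compat; lra.
    - left; apply Rmult_le_compat; lra.
    - left; nra.
    - right; nra. }
  unfold Rmax. destruct (Rle_dec (a^2) (b^2)); lra.
Qed.

Lemma corner_bound mum mup sgm sgp h0 h1 p mu sg :
  mum <= mu <= mup -> sgm <= sg <= sgp ->
  exists c, F h0 h1 p mu sg <= f_corner mum mup sgm sgp h0 h1 c p.
Proof.
  intros Hm Hs.
  assert (A : (h0 - p*mu)^2 <= Rmax ((h0 - p*mum)^2) ((h0 - p*mup)^2)).
  { apply sq_between. destruct (Rle_dec 0 p); [right|left]; split; nra. }
  assert (B : (h1 - p*sg)^2 <= Rmax ((h1 - p*sgm)^2) ((h1 - p*sgp)^2)).
  { apply sq_between. destruct (Rle_dec 0 p); [right|left]; split; nra. }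
  unfold Rmax in A, B.
  destruct (Rle_dec ((h0 - p*mum)^2) ((h0 - p*mup)^2));
  destruct (Rle_dec ((h1 - p*sgm)^2) ((h1 - p*sgp)^2)).
  - exists (true, true); unfold f_corner, F; simpl; lra.
  - exists (true, false); unfold f_corner, F; simpl; lra.
  - exists (false, true); unfold f_corner, F; simpl; lra.
  - exists (false, false); unfold f_corner, F; simpl; lra.
Qed.

Lemma corner_dec (a b : corner) : {a = b} + {a <> b}.
Proof. decide equality; apply Bool.bool_dec. Defined.

Definition btw (a b c : R) := b <= a <= c \/ c <= a <= b.

Lemma btw3 x y z : btw x y z \/ btw y x z \/ btw z x y.
Proof.
  unfold btw. destruct (Rle_dec x y); destruct (Rle_dec y z); destruct (Rle_dec x z).
  all: first [ left; left; lra | left; right; lra | right; left; left; lra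
             | right; left; right; lra | right; right; left; lra | right; right; right; lra ].
Qed.

Theorem mainTheorem13
  (mum mup sgm sgp h0 h1 : R)
  (Hmu0 : 0 < mum) (Hmu : mum < mup) (Hsg0 : 0 < sgm) (Hsg : sgm < sgp)
  (cs1 cs2 : corner) (Hdist : cs1 <> cs2)
  (pistar : R)
  (Hpistar : is_minimizer (f_pair mum mup sgm sgp h0 h1 cs1 cs2) pistar)
  (Hmaxpair : forall (c1 c2 : corner) (p : R), c1 <> c2 ->
      is_minimizer (f_pair mum mup sgm sgp h0 h1 c1 c2) p ->
      f_pair mum mup sgm sgp h0 h1 c1 c2 p <= f_pair mum mup sgm sgp h0 h1 cs1 cs2 pistar) :
  exists vstar : R,
    is_max_over_D mum mup sgm sgp h0 h1 pistar vstar /\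
    (forall pi v, is_max_over_D mum mup sgm sgp h0 h1 pi v -> vstar <= v) /\
    (forall pi v, is_max_over_D mum mup sgm sgp h0 h1 pi v -> v <= vstar -> pi = pistar).
Proof.
  set (fp := f_pair mum mup sgm sgp h0 h1 cs1 cs2) in *.
  set (m := fp pistar).
  set (fc := f_corner mum mup sgm sgp h0 h1).
  assert (Huniq : forall x, fp x <= m -> x = pistar).
  { intros x Hx. exact (pair_unique mum mup sgm sgp h0 h1 cs1 cs2 pistar x Hmu0 Hmu Hpistar Hx). }
  assert (Hc1 : forall x, fc cs1 x <= fp x) by (intros; apply Rmax_l).
  assert (Hc2 : forall x, fc cs2 x <= fp x) by (intros; apply Rmax_r).
  assert (Hfp : forall x, fc cs1 x <= m -> fc cs2 x <= m -> fp x <= m)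
    by (intros; apply Rmax_lub; auto).
  assert (Hconv : forall c a z b, btw z a b -> fc c a <= m -> fc c b <= m -> fc c z <= m).
  { intros c a z b Hb. unfold fc, f_corner. apply F_conv'. unfold btw in Hb; tauto. }
  assert (Key : forall k, fc k pistar <= m).
  { intros k.
    destruct (pair_min_exists mum mup sgm sgp h0 h1 k cs1 Hmu0 Hmu) as [p1 Hp1].
    destruct (pair_min_exists mum mup sgm sgp h0 h1 k cs2 Hmu0 Hmu) as [p2 Hp2].
    destruct (corner_dec k cs1) as [e1|n1]. { subst; apply Hc1. }
    destruct (corner_dec k cs2) as [e2|n2]. { subst; apply Hc2. }
    pose proof (Hmaxpair _ _ _ n1 Hp1) as A1. pose proof (Hmaxpair _ _ _ n2 Hp2) as A2.
    fold fp m in A1, A2. unfold f_pair in A1, A2. fold fc in A1, A2.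
    pose proof (Rle_trans _ _ _ (Rmax_l _ _) A1) as k1.
    pose proof (Rle_trans _ _ _ (Rmax_r _ _) A1) as c11.
    pose proof (Rle_trans _ _ _ (Rmax_l _ _) A2) as k2.
    pose proof (Rle_trans _ _ _ (Rmax_r _ _) A2) as c22.
    destruct (btw3 pistar p1 p2) as [B|[B|B]].
    - eapply Hconv; eauto.
    - assert (fc cs2 p1 <= m) by (eapply Hconv; [apply B| |]; auto; pose proof (Hc2 pistar); lra).
      assert (p1 = pistar) by (apply Huniq; apply Hfp; auto). subst; auto.
    - assert (fc cs1 p2 <= m) by (eapply Hconv; [apply B| |]; auto; pose proof (Hc1 pistar); lra).
      assert (p2 = pistar) by (apply Huniq; apply Hfp; auto). subst; auto. }
  exists m. split; [|split].
  - split.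
    + unfold m, fp, f_pair. unfold Rmax at 1.
      destruct (Rle_dec _ _).
      * exists (pick (fst cs2) mum mup), (pick (snd cs2) sgm sgp).
        repeat split; try apply pick_in; auto.
      * exists (pick (fst cs1) mum mup), (pick (snd cs1) sgm sgp).
        repeat split; try apply pick_in; auto.
    + intros mu sg Hm Hs. destruct (corner_bound mum mup sgm sgp h0 h1 pistar mu sg Hm Hs) as [c Hc].
      eapply Rle_trans; [apply Hc| apply Key].
  - intros pi v [_ Hv].
    apply Rle_trans with (fp pi); [apply Hpistar|].
    apply Rmax_lub; apply Hv; apply pick_in; auto.
  - intros pi v [_ Hv] Hle. apply Huniq.
    apply Rle_trans with v; auto.
    apply Rmax_lub; apply Hv; apply pick_in; auto.
Qed.
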